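(* Every CPS tensor $\mathcal{A}\in\mathbb{C}^{n\times n\times n\times n}$ can be written as \[ \mathcal{A}=\sum_{i=1}^R\alpha_i\big(p_i\otimes p_i\otimes\bar q_i\otimes\bar q_i+q_i\otimes q_i\otimes\bar p_i\otimes\bar p_i\big), \] with $\alpha_i\in\mathbb{R}$ and $p_i,q_i\in\mathbb{C}^n$ for $i=1,\dots,R$. If $\mathcal{A}$ has real entries, then the $p_i,q_i$ can be chosen in $\mathbb{R}^n$.
   Context: A tensor $\mathcal{A}\in\mathbb{C}^{n\times n\times n\times n}$ is conjugate partial-symmetric (CPS) if $\mathcal{A}_{ijkl}=\overline{\mathcal{A}_{klij}}$ and $\mathcal{A}_{ijkl}=\mathcal{A}_{jikl}=\mathcal{A}_{ijlk}$ for all indices. $(u\otimes v\otimes w\otimes z)_{ijkl}=u_iv_jw_kz_l$. *)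

(* Defs.v *)
From HB Require Import structures.
From mathcomp Require Import all_boot all_order all_algebra.
From mathcomp Require Import complex.
From mathcomp Require Import reals.
Set Implicit Arguments. Unset Strict Implicit. Unset Printing Implicit Defensive.
Import Order.TTheory GRing.Theory Num.Theory.
Local Open Scope ring_scope.
Local Open Scope complex_scope.

Definition tensor4 (T : Type) (n : nat) := 'I_n -> 'I_n -> 'I_n -> 'I_n -> T.

Definition is_CPS (R : realType) (n : nat) (A : tensor4 R[i] n) : Prop :=
  forall i j k l : 'I_n,
    [/\ A i j k l = (A k l i j)^*,
        A i j k l = A j i k l &
        A i j k l = A i j l k].

Definition outer4 (R : realType) (n : nat) (u v w z : 'I_n -> R[i]) : tensor4 R[i] n :=
  fun i j k l => u i * v j * w k * z l.

Definition conjv (R : realType) (n : nat) (v : 'I_n -> R[i]) : 'I_n -> R[i] :=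
  fun i => (v i)^*.

Definition CPS_decomp (R : realType) (n m : nat) (A : tensor4 R[i] n)
    (alpha : 'I_m -> R) (p q : 'I_m -> 'I_n -> R[i]) : Prop :=
  forall i j k l : 'I_n,
    A i j k l =
      \sum_(r < m) (alpha r)%:C *
         (outer4 (p r) (p r) (conjv (q r)) (conjv (q r)) i j k l
          + outer4 (q r) (q r) (conjv (p r)) (conjv (p r)) i j k l).

(* Main.v *)
Require Import Defs.
From HB Require Import structures.
From mathcomp Require Import all_boot all_order all_algebra.
From mathcomp Require Import complex.
From mathcomp Require Import reals.
From mathcomp Require Import ring.
Import Order.TTheory GRing.Theory Num.Theory.
Local Open Scope ring_scope.
Local Open Scope complex_scope.
Set Implicit Arguments. Unset Strict Implicit.

Section Aux.
Variable n : nat.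
Local Notation I := ('I_n).

Definition dl (K : pzRingType) (a x : I) : K := (a == x)%:R.
Definition SR (K : pzRingType) (a b i j : I) : K := dl K a i * dl K b j + dl K b i * dl K a j.

Lemma L1 (K : pzRingType) (F : I -> K) i : \sum_(a : I) dl K a i * F a = F i.
Proof.
rewrite (bigD1 i) //= /dl eqxx mul1r big1 ?addr0 // => a /negbTE ->.
by rewrite mul0r.
Qed.

Lemma L2 (K : comPzRingType) (f g : I -> I -> K) i j k l :
  \sum_(a : I) \sum_(b : I) (f a b * SR K a b i j + g a b * SR K a b k l)
  = f i j + f j i + g k l + g l k.
Proof.
rewrite (eq_bigr (fun a => dl K a i * f a j + dl K a j * f a i + dl K a k * g a l + dl K a l * g a k)); last first.
  move=> a _.
  transitivity (dl K a i * (\sum_(b : I) dl K b j * f a b) + dl K a j * (\sum_(b : I) dl K b i * f a b)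
     + dl K a k * (\sum_(b : I) dl K b l * g a b) + dl K a l * (\sum_(b : I) dl K b k * g a b)).
    rewrite !mulr_sumr -!big_split; apply: eq_bigr => b _ /=; rewrite /SR; ring.
  by rewrite !L1.
by rewrite !big_split /= !L1.
Qed.

Lemma L4 (K : comPzRingType) (f g : I -> I -> I -> I -> K) i j k l :
  \sum_(a : I) \sum_(b : I) \sum_(c : I) \sum_(d : I)
     (f a b c d * (SR K a b i j * SR K c d k l) + g a b c d * (SR K c d i j * SR K a b k l))
  = f i j k l + f i j l k + f j i k l + f j i l k
    + (g k l i j + g k l j i + g l k i j + g l k j i).
Proof.
rewrite (eq_bigr (fun a => \sum_(b : I) ((f a b k l + f a b l k) * SR K a b i j
      + (g a b i j + g a b j i) * SR K a b k l))); last first.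
  move=> a _; apply: eq_bigr => b _.
  transitivity (\sum_(c : I) \sum_(d : I) ((f a b c d * SR K a b i j) * SR K c d k l
        + (g a b c d * SR K a b k l) * SR K c d i j)).
    by apply: eq_bigr => c _; apply: eq_bigr => d _; ring.
  rewrite (@L2 K (fun c d => f a b c d * SR K a b i j) (fun c d => g a b c d * SR K a b k l)).
  ring.
rewrite (@L2 K (fun a b => f a b k l + f a b l k) (fun a b => g a b i j + g a b j i)).
ring.
Qed.


Variable R : realType.

Lemma conj_i : ('i%C : R[i])^* = - 'i%C.
Proof. by apply/eqP; rewrite eq_complex /= oppr0 !eqxx. Qed.

Lemma conj1i : (1 + 'i%C : R[i])^* = 1 - 'i%C.
Proof. by apply/eqP; rewrite eq_complex /= !addr0 !subr0 add0r sub0r !eqxx. Qed.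

Definition termg (al : R) (P Q : I -> R[i]) i j k l :=
  al%:C * (outer4 P P (conjv Q) (conjv Q) i j k l + outer4 Q Q (conjv P) (conjv P) i j k l).
Definition Cv (U : I -> R) : I -> R[i] := fun x => (U x)%:C.
Definition Im1 (U : I -> R) : I -> R[i] := fun x => (1 + 'i%C) * (U x)%:C.
Definition ur (s : R) (a b : I) : I -> R := fun x => dl R a x + s * dl R b x.

Lemma term_re al U V i j k l : termg al (Cv U) (Cv V) i j k l =
  al%:C * ((U i)%:C * (U j)%:C * (V k)%:C * (V l)%:C + (V i)%:C * (V j)%:C * (U k)%:C * (U l)%:C).
Proof. by rewrite /termg /outer4 /conjv /Cv !conjc_real. Qed.

Lemma conjIm1 U x : (Im1 U x)^* = (1 - 'i%C) * (U x)%:C.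
Proof. rewrite /Im1 rmorphM; congr (_ * _); [exact: conj1i | exact: conjc_real]. Qed.

Lemma term_im al U V i j k l : termg al (Im1 U) (Cv V) i j k l =
  al%:C * 2 * 'i%C * ((U i)%:C * (U j)%:C * (V k)%:C * (V l)%:C - (V i)%:C * (V j)%:C * (U k)%:C * (U l)%:C).
Proof.
rewrite /termg /outer4 /conjv !conjIm1 /Cv /Im1 !conjc_real.
have s1 : (1 + 'i%C) * (1 + 'i%C) = 2 * 'i%C :> R[i].
  have -> : (1 + 'i%C) * (1 + 'i%C) = 1 + 2 * 'i%C + 'i%C ^+ 2 :> R[i] by ring.
  by rewrite sqr_i; ring.
have s2 : (1 - 'i%C) * (1 - 'i%C) = - (2 * 'i%C) :> R[i].
  have -> : (1 - 'i%C) * (1 - 'i%C) = 1 - 2 * 'i%C + 'i%C ^+ 2 :> R[i] by ring.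
  by rewrite sqr_i; ring.
set ui := (U i)%:C; set uj := (U j)%:C; set uk := (U k)%:C; set ul := (U l)%:C.
set vi := (V i)%:C; set vj := (V j)%:C; set vk := (V k)%:C; set vl := (V l)%:C.
transitivity (al%:C * ((1 + 'i%C) * (1 + 'i%C) * (ui * uj * vk * vl) + (1 - 'i%C) * (1 - 'i%C) * (vi * vj * uk * ul))).
  ring.
rewrite s1 s2; ring.
Qed.

Lemma urC s a b x : (ur s a b x)%:C = dl R[i] a x + s%:C * dl R[i] b x.
Proof. by rewrite /ur rmorphD rmorphM /dl !rmorph_nat. Qed.

Definition Lc (z : R[i]) a b c d : seq (R * (I -> R[i]) * (I -> R[i])) :=
  let x := complex.Re z in let y := complex.Im z in
  [:: (x / 32, Cv (ur 1 a b), Cv (ur 1 c d)); (- (x / 32), Cv (ur 1 a b), Cv (ur (-1) c d));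
      (- (x / 32), Cv (ur (-1) a b), Cv (ur 1 c d)); (x / 32, Cv (ur (-1) a b), Cv (ur (-1) c d));
      (y / 64, Im1 (ur 1 a b), Cv (ur 1 c d)); (- (y / 64), Im1 (ur 1 a b), Cv (ur (-1) c d));
      (- (y / 64), Im1 (ur (-1) a b), Cv (ur 1 c d)); (y / 64, Im1 (ur (-1) a b), Cv (ur (-1) c d))].

Definition Lr (x : R) a b c d : seq (R * (I -> R) * (I -> R)) :=
  [:: (x / 32, ur 1 a b, ur 1 c d); (- (x / 32), ur 1 a b, ur (-1) c d);
      (- (x / 32), ur (-1) a b, ur 1 c d); (x / 32, ur (-1) a b, ur (-1) c d)].

Lemma step1c z a b c d i j k l :
  \sum_(t <- Lc z a b c d) termg t.1.1 t.1.2 t.2 i j k l =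
  (z * (SR R[i] a b i j * SR R[i] c d k l) + conjc z * (SR R[i] c d i j * SR R[i] a b k l)) / 8.
Proof.
rewrite /Lc !big_cons big_nil /= !term_re !term_im !urC.
set x := complex.Re z; set y := complex.Im z.
have hz : z^* = x%:C - 'i%C * y%:C.
  rewrite /x /y; clear x y; case: z => p q /=; apply/eqP; rewrite eq_complex /=; simpc.
  done.
rewrite hz (complexE z) -/x -/y.
rewrite !rmorphN !rmorphM !rmorph1 !fmorphV !rmorph_nat /SR.
field. all: try by rewrite pnatr_eq0. all: done.
Qed.

Lemma step1r x a b c d i j k l :
  \sum_(t <- Lr x a b c d) termg t.1.1 (Cv t.1.2) (Cv t.2) i j k l =
  (x%:C * (SR R[i] a b i j * SR R[i] c d k l) + conjc (x%:C) * (SR R[i] c d i j * SR R[i] a b k l)) / 8.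
Proof.
rewrite /Lr !big_cons big_nil /= !term_re !urC.
have -> : Complex x (- 0) = x%:C by rewrite oppr0.
rewrite !rmorphN !rmorphM !rmorph1 !fmorphV !rmorph_nat /SR.
field. all: try by rewrite pnatr_eq0. all: done.
Qed.


Lemma step2 (A : tensor4 R[i] n) : is_CPS A -> forall i j k l,
  \sum_(a : I) \sum_(b : I) \sum_(c : I) \sum_(d : I)
    ((A a b c d * (SR R[i] a b i j * SR R[i] c d k l)
      + conjc (A a b c d) * (SR R[i] c d i j * SR R[i] a b k l)) / 8)
  = A i j k l.
Proof.
move=> H i j k l.
transitivity (\sum_(a : I) \sum_(b : I) \sum_(c : I) \sum_(d : I)
    ((A a b c d / 8) * (SR R[i] a b i j * SR R[i] c d k l)
      + (conjc (A a b c d) / 8) * (SR R[i] c d i j * SR R[i] a b k l))).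
  by do 4 (apply: eq_bigr => ? _); ring.
rewrite (@L4 R[i] (fun a b c d => A a b c d / 8) (fun a b c d => conjc (A a b c d) / 8)).
have [e4 e1 _] := H i j k l.
have [_ _ e2] := H i j k l.
have [_ _ e3] := H j i k l.
have [_ e6 e5] := H k l i j.
have [_ _ e7] := H l k i j.
rewrite -e2 -e3 -e1 -e7 -e6 -e5 -e4.
field. all: try by rewrite pnatr_eq0. all: done.
Qed.

Definition termT T (al : T -> R) (P Q : T -> I -> R[i]) (t : T) i j k l :=
  termg (al t) (P t) (Q t) i j k l.

Lemma pack T (s : seq T) (t0 : T) (al : T -> R) (P Q : T -> I -> R[i]) (A : tensor4 R[i] n) :
  (forall i j k l, A i j k l = \sum_(t <- s) termg (al t) (P t) (Q t) i j k l) ->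
  CPS_decomp A (fun r : 'I_(size s) => al (nth t0 s r))
    (fun r => P (nth t0 s r)) (fun r => Q (nth t0 s r)).
Proof. by move=> H i j k l; rewrite H (big_nth t0) big_mkord. Qed.

Definition bigl T (L : I -> I -> I -> I -> seq T) : seq T :=
  flatten [seq flatten [seq flatten [seq flatten [seq L a b c d | d <- index_enum I]
    | c <- index_enum I] | b <- index_enum I] | a <- index_enum I].

Lemma sum_bigl T (L : I -> I -> I -> I -> seq T) (F : T -> R[i]) :
  \sum_(t <- bigl L) F t =
  \sum_(a : I) \sum_(b : I) \sum_(c : I) \sum_(d : I) \sum_(t <- L a b c d) F t.
Proof.
rewrite /bigl big_flatten big_map; apply: eq_bigr => a _.
rewrite big_flatten big_map; apply: eq_bigr => b _.
rewrite big_flatten big_map; apply: eq_bigr => c _.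
by rewrite big_flatten big_map.
Qed.

End Aux.

Theorem corollary4p3 (R : realType) (n : nat) (A : tensor4 R[i] n) :
  is_CPS A ->
  (exists (m : nat) (alpha : 'I_m -> R) (p q : 'I_m -> 'I_n -> R[i]),
      CPS_decomp A alpha p q) /\
  ((forall i j k l : 'I_n, A i j k l \is Num.real) ->
   exists (m : nat) (alpha : 'I_m -> R) (p q : 'I_m -> 'I_n -> R),
      CPS_decomp A alpha (fun r x => (p r x)%:C) (fun r x => (q r x)%:C)).
Proof.
move=> H; split.
  pose s := bigl (fun a b c d => Lc (A a b c d) a b c d).
  pose t0 : R * ('I_n -> R[i]) * ('I_n -> R[i]) := (0, fun _ => 0, fun _ => 0).
  exists (size s), (fun r => (nth t0 s r).1.1), (fun r => (nth t0 s r).1.2),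
    (fun r => (nth t0 s r).2).
  apply: (@pack n R _ s t0 (fun t => t.1.1) (fun t => t.1.2) (fun t => t.2)) => i j k l.
  rewrite sum_bigl -(step2 H i j k l).
  do 4 (apply: eq_bigr => ? _).
  by symmetry; apply: step1c.
move=> Hr.
pose s := bigl (fun a b c d => Lr (complex.Re (A a b c d)) a b c d).
pose t0 : R * ('I_n -> R) * ('I_n -> R) := (0, fun _ => 0, fun _ => 0).
exists (size s), (fun r => (nth t0 s r).1.1), (fun r x => (nth t0 s r).1.2 x),
  (fun r x => (nth t0 s r).2 x).
apply: (@pack n R _ s t0 (fun t => t.1.1) (fun t => Cv t.1.2) (fun t => Cv t.2)) => i j k l.
rewrite sum_bigl -(step2 H i j k l).
do 4 (apply: eq_bigr => ? _).
by symmetry; rewrite step1r RRe_real.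
Qed.
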